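(* Let $R$ be a unital associative ring, $n=3$, and let $\Omega$ be $\Phi^k$ or $\Psi^k$ for some integer $k$. For $$A=\begin{pmatrix}1&1&1\\1&a&b\\1&c&d\end{pmatrix}\in{\rm dom}(\Omega)\quad\text{write}\quad \Omega(A)=\begin{pmatrix}1&1&1\\1&\alpha&\beta\\1&\gamma&\delta\end{pmatrix},$$ so that $\alpha,\beta,\gamma,\delta$ are functions of $(a,b,c,d)$, and write $\alpha=f(a,b,c,d)$. Then ${\rm dom}(\Omega)$ is invariant under the permutations $(a,b,c,d)\mapsto(b,a,d,c)$, $(c,d,a,b)$, $(d,c,b,a)$ of the entries, and $$\beta=f(b,a,d,c),\quad\gamma=f(c,d,a,b),\quad\delta=f(d,c,b,a).$$
   Context: $R^*$: units of $R$. $M_3^*(R)$: invertible $3\times3$ matrices; $M_3^\star(R)$: matrices with all entries in $R^*$. $J_1(M)=M^{-1}$ on $M_3^*(R)$; $J_2(M)_{jk}=(M_{kj})^{-1}$ on $M_3^\star(R)$; $J=J_2\circ J_1$, $J^{-1}=J_1\circ J_2$, where $g\circ f$ has domain $\{x\in{\rm dom}(f):f(x)\in{\rm dom}(g)\}$. $\widehat M_3(R)$: matrices whose first row and column consist of $1$'s. For $A=\{a_{j,k}\}\in M_3^\star(R)$: $\Lambda^L(A)_{j,k}=a_{1,1}a_{j,1}^{-1}a_{j,k}a_{1,k}^{-1}$, $\Lambda^R(A)_{j,k}=a_{j,1}^{-1}a_{j,k}a_{1,k}^{-1}a_{1,1}$. $\Phi(A)=J_2(\Lambda^L(A^{-1}))$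 with ${\rm dom}(\Phi)={\rm dom}(J)\cap\widehat M_3(R)\cap M_3^\star(R)$; its inverse is $\Phi^{-1}(A)=\Lambda^R(J^{-1}(A))$ with domain $\widehat M_3(R)\cap\{M\in{\rm dom}(J^{-1}):J^{-1}(M)\in M_3^\star(R)\}$. $\Psi=J_2\circ\Phi\circ J_2$, with inverse $J_2\circ\Phi^{-1}\circ J_2$. Integer powers are iterated compositions (negative powers using the inverse maps) with natural domains. *)

(* Defs.v *)
(* R : unitRingType (unital associative, possibly noncommutative ring
   with its units R^* and inverse x^-1). Partial maps are modelled as T -> option T. *)
From HB Require Import structures.
From mathcomp Require Import all_boot all_algebra.
From Stdlib Require Import ClassicalEpsilon.
Set Implicit Arguments. Unset Strict Implicit. Unset Printing Implicit Defensive.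
Import GRing.Theory.
Local Open Scope ring_scope.

Section Defs.
Variable R : unitRingType.
Notation M := 'M[R]_3.

Definition pcomp (g f : M -> option M) : M -> option M :=
  fun x => match f x with Some y => g y | None => None end.
Fixpoint piter (n : nat) (f : M -> option M) : M -> option M :=
  match n with O => @Some M | S m => pcomp f (piter m f) end.
Definition ipow (f finv : M -> option M) (k : int) : M -> option M :=
  match k with Posz n => piter n f | Negz n => piter n.+1 finv end.

Definition invertible (A : M) : Prop := exists B : M, A *m B = 1%:M /\ B *m A = 1%:M.

Definition J1 (A : M) : option M :=
  match excluded_middle_informative (invertible A) with
  | left H => Some (proj1_sig (constructive_indefinite_description _ H))
  | right _ => None
  end.

Definition allunits (A : M) : bool := [forall i, [forall j, A i j \is a GRing.unit]].

Definition J2 (A : M) : option M :=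
  if allunits A then Some (\matrix_(j, k) (A k j)^-1) else None.

Definition J : M -> option M := pcomp J2 J1.
Definition Jinv : M -> option M := pcomp J1 J2.

Definition hat (A : M) : bool := [forall i, (A i 0 == 1) && (A 0 i == 1)].

Definition LamL (A : M) : M :=
  \matrix_(j, k) (A 0 0 * (A j 0)^-1 * A j k * (A 0 k)^-1).
Definition LamR (A : M) : M :=
  \matrix_(j, k) ((A j 0)^-1 * A j k * (A 0 k)^-1 * A 0 0).

Definition Phi (A : M) : option M :=
  if [&& isSome (J A), hat A & allunits A] then
    match J1 A with Some B => J2 (LamL B) | None => None end
  else None.

Definition PhiInv (A : M) : option M :=
  if hat A then
    match Jinv A with Some B => if allunits B then Some (LamR B) else None | None => None end
  else None.

Definition Psi : M -> option M := pcomp J2 (pcomp Phi J2).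
Definition PsiInv : M -> option M := pcomp J2 (pcomp PhiInv J2).

Definition mk (a b c d : R) : M :=
  \matrix_(i, j)
    match nat_of_ord i, nat_of_ord j with
    | 1, 1 => a | 1, 2 => b | 2, 1 => c | 2, 2 => d | _, _ => 1 end.

End Defs.

Definition i1 : 'I_3 := @Ordinal 3 1 isT.
Definition i2 : 'I_3 := @Ordinal 3 2 isT.

(* Main.v *)
Require Import Defs.
From mathcomp Require Import all_boot all_algebra.
From Stdlib Require Import ClassicalEpsilon.
Set Implicit Arguments. Unset Strict Implicit. Unset Printing Implicit Defensive.
Import GRing.Theory.
Local Open Scope ring_scope.

Definition good (f : 'I_3 -> 'I_3) := involutive f /\ f 0 = 0.

Definition Pm (R : unitRingType) (f g : 'I_3 -> 'I_3) (A : 'M[R]_3) : 'M[R]_3 :=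
  \matrix_(i, j) A (f i) (g j).

Section S.
Variable R : unitRingType.
Implicit Types A B C : 'M[R]_3.

Lemma PmK f g A : good f -> good g -> Pm f g (Pm f g A) = A.
Proof. move=> [fK _] [gK _]; apply/matrixP => i j; by rewrite !mxE fK gK. Qed.

Lemma Pm_mul f g h A B : good g -> Pm f g A *m Pm g h B = Pm f h (A *m B).
Proof.
move=> [gK _]; apply/matrixP => i j.
rewrite [LHS]mxE [RHS]mxE mxE (reindex_inj (inv_inj gK)) /=.
by apply: eq_bigr => k _; rewrite !mxE gK.
Qed.

Lemma Pm1 f : good f -> Pm f f (1%:M : 'M[R]_3) = 1%:M.
Proof. move=> [fK _]; apply/matrixP => i j; by rewrite !mxE (inj_eq (inv_inj fK)). Qed.

Lemma inv_Pm1 f g A : good f -> good g -> invertible A -> invertible (Pm f g A).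
Proof.
move=> hf hg [B [h1 h2]]; exists (Pm g f B).
by rewrite !Pm_mul // h1 h2 !Pm1.
Qed.

Lemma J1_some A B : A *m B = 1%:M -> B *m A = 1%:M -> J1 A = Some B.
Proof.
move=> h1 h2; rewrite /J1; case: excluded_middle_informative => [H|H];
  last by exfalso; apply: H; exists B.
case: (constructive_indefinite_description _ H) => C [c1 c2] /=.
congr Some.
by rewrite -[C]mulmx1 -h1 mulmxA c2 mul1mx.
Qed.

Lemma J1_none A : ~ invertible A -> J1 A = None.
Proof. by move=> H; rewrite /J1; case: excluded_middle_informative. Qed.

Lemma J1_inv A B : J1 A = Some B -> A *m B = 1%:M /\ B *m A = 1%:M.
Proof.
rewrite /J1; case: excluded_middle_informative => [H|H] //.
by case: (constructive_indefinite_description _ H) => C [c1 c2] /= [<-].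
Qed.

Lemma J1_Pm f g A : good f -> good g -> J1 (Pm f g A) = omap (Pm g f) (J1 A).
Proof.
move=> hf hg; case E: (J1 A) => [B|] /=.
  have [h1 h2] := J1_inv E.
  by apply: J1_some; rewrite Pm_mul // ?h1 ?h2 Pm1.
apply: J1_none => H.
have : invertible (Pm f g (Pm f g A)) by apply: inv_Pm1.
rewrite PmK // => [[B [h1 h2]]].
by rewrite (J1_some h1 h2) in E.
Qed.

Lemma allunits_Pm1 f g A : good f -> good g -> allunits (Pm f g A) -> allunits A.
Proof.
move=> [fK _] [gK _] /forallP H; apply/forallP => i; apply/forallP => j.
by move: (H (f i)) => /forallP /(_ (g j)); rewrite mxE fK gK.
Qed.

Lemma allunits_Pm f g A : good f -> good g -> allunits (Pm f g A) = allunits A.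
Proof.
move=> hf hg; apply/idP/idP; first exact: allunits_Pm1.
by rewrite -{1}(PmK A hf hg); apply: allunits_Pm1.
Qed.

Lemma hat_Pm1 f g A : good f -> good g -> hat (Pm f g A) -> hat A.
Proof.
move=> [fK f0] [gK g0] /forallP H; apply/forallP => i; apply/andP; split.
  by move: (H (f i)) => /andP [+ _]; rewrite mxE fK g0.
by move: (H (g i)) => /andP [_]; rewrite mxE gK f0.
Qed.

Lemma hat_Pm f g A : good f -> good g -> hat (Pm f g A) = hat A.
Proof.
move=> hf hg; apply/idP/idP; first exact: hat_Pm1.
by rewrite -{1}(PmK A hf hg); apply: hat_Pm1.
Qed.

Lemma J2_Pm f g A : good f -> good g -> J2 (Pm f g A) = omap (Pm g f) (J2 A).
Proof.
move=> hf hg; rewrite /J2 allunits_Pm //; case: allunits => //=.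
by congr Some; apply/matrixP => i j; rewrite !mxE.
Qed.

Lemma LamL_Pm f g A : good f -> good g -> LamL (Pm f g A) = Pm f g (LamL A).
Proof. move=> [_ f0] [_ g0]; apply/matrixP => i j; by rewrite !mxE f0 g0. Qed.

Lemma LamR_Pm f g A : good f -> good g -> LamR (Pm f g A) = Pm f g (LamR A).
Proof. move=> [_ f0] [_ g0]; apply/matrixP => i j; by rewrite !mxE f0 g0. Qed.

Lemma J_Pm f g A : good f -> good g -> J (Pm f g A) = omap (Pm f g) (J A).
Proof.
move=> hf hg; rewrite /J /Defs.pcomp J1_Pm //; case: (J1 A) => //= B.
by rewrite J2_Pm.
Qed.

Lemma Jinv_Pm f g A : good f -> good g -> Jinv (Pm f g A) = omap (Pm f g) (Jinv A).
Proof.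
move=> hf hg; rewrite /Jinv /Defs.pcomp J2_Pm //; case: (J2 A) => //= B.
by rewrite J1_Pm.
Qed.

Lemma Phi_Pm f g A : good f -> good g -> Phi (Pm f g A) = omap (Pm f g) (Phi A).
Proof.
move=> hf hg; rewrite /Phi J_Pm // hat_Pm // allunits_Pm //.
case: (J A) => //=; case: hat => //=; case: allunits => //=.
rewrite J1_Pm //; case: (J1 A) => //= B.
by rewrite LamL_Pm // J2_Pm.
Qed.

Lemma PhiInv_Pm f g A : good f -> good g -> PhiInv (Pm f g A) = omap (Pm f g) (PhiInv A).
Proof.
move=> hf hg; rewrite /PhiInv hat_Pm //; case: hat => //.
rewrite Jinv_Pm //; case: (Jinv A) => //= B.
rewrite allunits_Pm //; case: allunits => //=.
by rewrite LamR_Pm.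
Qed.

Lemma Psi_Pm f g A : good f -> good g -> Psi (Pm f g A) = omap (Pm f g) (Psi A).
Proof.
move=> hf hg; rewrite /Psi /Defs.pcomp J2_Pm //; case: (J2 A) => //= B.
rewrite Phi_Pm //; case: (Phi B) => //= C.
by rewrite J2_Pm.
Qed.

Lemma PsiInv_Pm f g A : good f -> good g -> PsiInv (Pm f g A) = omap (Pm f g) (PsiInv A).
Proof.
move=> hf hg; rewrite /PsiInv /Defs.pcomp J2_Pm //; case: (J2 A) => //= B.
rewrite PhiInv_Pm //; case: (PhiInv B) => //= C.
by rewrite J2_Pm.
Qed.

End S.

Section T.
Variable R : unitRingType.
Implicit Types A B C : 'M[R]_3.

Lemma unit_of A i j : allunits A -> A i j \is a GRing.unit.
Proof. by move/forallP/(_ i)/forallP/(_ j). Qed.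

Lemma J2_hat A B : J2 A = Some B -> (forall i, A i 0 = 1 /\ A 0 i = 1) -> hat B.
Proof.
rewrite /J2; case: allunits => //= -[<-] H; apply/forallP => i.
by rewrite !mxE; case: (H i) => -> ->; rewrite invr1 eqxx.
Qed.

Lemma hat_ones A : hat A -> forall i, A i 0 = 1 /\ A 0 i = 1.
Proof. by move/forallP => H i; case/andP: (H i) => /eqP -> /eqP ->. Qed.

Lemma LamL_ones C : allunits C -> forall i, LamL C i 0 = 1 /\ LamL C 0 i = 1.
Proof.
move=> hC i; rewrite !mxE; split.
  by rewrite -(mulrA _ _ (C i 0)) mulVr ?unit_of // mulr1 mulrV ?unit_of.
by rewrite mulrV ?unit_of // mul1r mulrV ?unit_of.
Qed.

Lemma LamR_ones C : allunits C -> forall i, LamR C i 0 = 1 /\ LamR C 0 i = 1.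
Proof.
move=> hC i; rewrite !mxE; split.
  by rewrite mulVr ?unit_of // mul1r mulVr ?unit_of.
by rewrite -(mulrA _ (C 0 i)) mulrV ?unit_of // mulr1 mulVr ?unit_of.
Qed.

Lemma Phi_hat A B : Phi A = Some B -> hat B.
Proof.
rewrite /Phi /J /Defs.pcomp; case: (J1 A) => [C|]; last by case: hat; case: allunits.
case E: (J2 C) => [D|] //=; case: hat; case: allunits => //= H.
apply: (J2_hat H); apply: LamL_ones.
by move: E; rewrite /J2; case: allunits.
Qed.

Lemma PhiInv_hat A B : PhiInv A = Some B -> hat B.
Proof.
rewrite /PhiInv; case: hat => //; case: (Jinv A) => // C.
case E: allunits => // -[<-]; apply/forallP => i.
by case: (LamR_ones E i) => -> ->; rewrite eqxx.
Qed.

Lemma Psi_hat A B : Psi A = Some B -> hat B.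
Proof.
rewrite /Psi /Defs.pcomp; case: (J2 A) => // C; case E: (Phi C) => [D|] // H.
exact: (J2_hat H (hat_ones (Phi_hat E))).
Qed.

Lemma PsiInv_hat A B : PsiInv A = Some B -> hat B.
Proof.
rewrite /PsiInv /Defs.pcomp; case: (J2 A) => // C; case E: (PhiInv C) => [D|] // H.
exact: (J2_hat H (hat_ones (PhiInv_hat E))).
Qed.

Definition equiv (F : 'M[R]_3 -> option 'M[R]_3) :=
  forall f g A, good f -> good g -> F (Pm f g A) = omap (Pm f g) (F A).
Definition hatout (F : 'M[R]_3 -> option 'M[R]_3) :=
  forall A B, hat A -> F A = Some B -> hat B.

Lemma piter_equiv F n : equiv F -> equiv (piter n F).
Proof.
move=> hF f g A hf hg; elim: n => [|n IH] //=.
rewrite /Defs.pcomp IH; case: (piter n F A) => //= B; exact: hF.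
Qed.

Lemma piter_hat F n : hatout F -> hatout (piter n F).
Proof.
move=> hF; elim: n => [|n IH] A B hA /=; first by case=> <-.
rewrite /Defs.pcomp; case E: (piter n F A) => [C|] //; apply: hF; exact: IH E.
Qed.

Lemma ipow_equiv F G k : equiv F -> equiv G -> equiv (ipow F G k).
Proof. by case: k => n hF hG; rewrite /ipow; apply: piter_equiv. Qed.

Lemma ipow_hat F G k : hatout F -> hatout G -> hatout (ipow F G k).
Proof. by case: k => n hF hG; rewrite /ipow; apply: piter_hat. Qed.

End T.

Definition swap (i : 'I_3) : 'I_3 := if i == i1 then i2 else if i == i2 then i1 else i.

Lemma good_id : good id.
Proof. by []. Qed.

Lemma good_swap : good swap.
Proof.
split; last by [].
by case=> [[|[|[|n]]] Hi] //; apply/val_inj.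
Qed.

Lemma mk_c (R : unitRingType) (a b c d : R) : mk b a d c = Pm id swap (mk a b c d).
Proof.
apply/matrixP => i j; rewrite !mxE.
by case: i => [[|[|[|?]]] ?]; case: j => [[|[|[|?]]] ?].
Qed.

Lemma mk_r (R : unitRingType) (a b c d : R) : mk c d a b = Pm swap id (mk a b c d).
Proof.
apply/matrixP => i j; rewrite !mxE.
by case: i => [[|[|[|?]]] ?]; case: j => [[|[|[|?]]] ?].
Qed.

Lemma mk_rc (R : unitRingType) (a b c d : R) : mk d c b a = Pm swap swap (mk a b c d).
Proof.
apply/matrixP => i j; rewrite !mxE.
by case: i => [[|[|[|?]]] ?]; case: j => [[|[|[|?]]] ?].
Qed.

Lemma mk_hat (R : unitRingType) (a b c d : R) : hat (mk a b c d).
Proof. by apply/forallP => -[[|[|[|?]]] ?]; rewrite !mxE /= eqxx. Qed.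

Theorem corollary1 (R : unitRingType) (Omega : 'M[R]_3 -> option 'M[R]_3)
  (HOmega : exists k : int,
     Omega = ipow (@Phi R) (@PhiInv R) k \/ Omega = ipow (@Psi R) (@PsiInv R) k) :
  (forall a b c d : R,
     (isSome (Omega (mk a b c d)) -> isSome (Omega (mk b a d c))) /\
     (isSome (Omega (mk a b c d)) -> isSome (Omega (mk c d a b))) /\
     (isSome (Omega (mk a b c d)) -> isSome (Omega (mk d c b a)))) /\
  (forall (a b c d : R) (B : 'M[R]_3), Omega (mk a b c d) = Some B ->
     hat B /\
     exists B1 B2 B3 : 'M[R]_3,
       [/\ Omega (mk b a d c) = Some B1, Omega (mk c d a b) = Some B2
          & Omega (mk d c b a) = Some B3] /\
       [/\ B i1 i2 = B1 i1 i1, B i2 i1 = B2 i1 i1 & B i2 i2 = B3 i1 i1]).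
Proof.
have [hE hH] : equiv Omega /\ hatout Omega.
  case: HOmega => k [->|->]; split.
  - apply: ipow_equiv => f g A; [exact: Phi_Pm | exact: PhiInv_Pm].
  - apply: ipow_hat => A B _; [exact: Phi_hat | exact: PhiInv_hat].
  - apply: ipow_equiv => f g A; [exact: Psi_Pm | exact: PsiInv_Pm].
  - apply: ipow_hat => A B _; [exact: Psi_hat | exact: PsiInv_hat].
have g1 := good_id; have g2 := good_swap.
split.
  move=> a b c d; rewrite (mk_c a b c d) (mk_r a b c d) (mk_rc a b c d) !hE //.
  by case: (Omega (mk a b c d)).
move=> a b c d B HB; split; first exact: hH (mk_hat a b c d) HB.
exists (Pm id swap B), (Pm swap id B), (Pm swap swap B).
rewrite (mk_c a b c d) (mk_r a b c d) (mk_rc a b c d) !hE // HB; split; first by [].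
by split; rewrite mxE /swap /=.
Qed.
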